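(* Let $G$ be a finite undirected graph, let $\tau\ge 1$ and $k$ be integers, and let $G'$ be the $(k,\tau)$-truss of $G$. Then for every connected component $G''$ of $G'$, the diameter satisfies $\omega(G'')\le \frac{2\tau(|V(G'')|-1)}{k}$.
   Context: Graphs are finite, simple, undirected and unweighted. A path may repeat vertices; its length is its number of edges. The diameter $\omega(H)$ of a connected graph $H$ is the maximum, over pairs of vertices, of the length of a shortest path between them in $H$. For vertices $v,u$ of a graph $H$, $u$ is $\tau$-hop reachable from $v$ in $H$ if $H$ contains a path between $u$ and $v$ of length at most $\tau$. $N_\tau(v,H)$ is the set of vertices $u\neq v$ that are $\tau$-hop reachable from $v$ in $H$. For an edge $e=(u,v)$ of $H$, $\Delta_\tau(e,H)=N_\tau(u,H)\cap N_\tau(v,H)$ and $\mathrm{sup}_\tau(e,H)=|\Delta_\tau(e,H)|$. The $(k,\tau)$-truss of $G$ is the maximal subgraph $G'$ of $G$ such that $\mathrm{sup}_\tau(e,G')\ge k-2$ for every edge $e\in E(G')$ (supports computed inside $G'$) and no more edges of $G$ can be added while keeping this property; a subgraph is determined by its edge set, its vertex set being the set of endpoints of its edges. *)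

(* Defs.v *)
From mathcomp Require Import all_boot all_order all_algebra.
Set Implicit Arguments. Unset Strict Implicit. Unset Printing Implicit Defensive.

Section Graphs.
Variable T : finType.

(* A simple graph on T is given by a symmetric irreflexive relation e.  A subgraph is given by
   its edge set F : {set {set T}}; its vertices are the endpoints. *)
Definition edges_of (e : rel T) : {set {set T}} :=
  [set [set p.1; p.2] | p in [set p : T * T | e p.1 p.2]].

Definition adj (F : {set {set T}}) : rel T :=
  fun x y => (x != y) && ([set x; y] \in F).

Definition verts (F : {set {set T}}) : {set T} :=
  [set x | [exists y, adj F x y]].

Definition reachb (F : {set {set T}}) (n : nat) (v u : T) : bool :=
  [exists m : 'I_n.+1, exists p : m.-tuple T, path (adj F) v p && (last v p == u)].

Definition Nb (F : {set {set T}}) (tau : nat) (v : T) : {set T} :=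
  [set u | (u != v) && reachb F tau v u].

Definition supp (F : {set {set T}}) (tau : nat) (u v : T) : nat :=
  #|Nb F tau u :&: Nb F tau v|.

Definition truss_prop (e : rel T) (k tau : nat) (F : {set {set T}}) : bool :=
  (F \subset edges_of e) &&
  [forall u, forall v, adj F u v ==> (k - 2 <= supp F tau u v)].

Definition is_truss (e : rel T) (k tau : nat) (F : {set {set T}}) : Prop :=
  maxset (truss_prop e k tau) F.

Definition is_component (F : {set {set T}}) (C : {set T}) : Prop :=
  exists2 x, x \in verts F & C = [set y | connect (adj F) x y].

Definition comp_edges (F : {set {set T}}) (C : {set T}) : {set {set T}} :=
  [set f in F | f \subset C].

(* shortest-path distance in F: least n with a walk of length <= n
   (any shortest path has length < #|T|, so searching below #|T| suffices
   for connected pairs) *)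
Definition dist (F : {set {set T}}) (u v : T) : nat :=
  find (fun n => reachb F n u v) (iota 0 #|T|).

Definition diam (F : {set {set T}}) (C : {set T}) : nat :=
  \max_(u in C) \max_(v in C) dist F u v.

End Graphs.

(* Main.v *)
Require Import Defs.
From mathcomp Require Import all_boot all_order all_algebra.
From mathcomp Require Import zify.
Import GRing.Theory Num.Theory.
Set Implicit Arguments. Unset Strict Implicit.

Section Aux.
Variable T : finType.
Implicit Types (F : {set {set T}}).

Lemma reachbP F n v u :
  reflect (exists p : seq T, [/\ size p <= n, path (adj F) v p & last v p = u])
          (reachb F n v u).
Proof.
apply: (iffP existsP).
- move=> [m /existsP [p /andP [Hp /eqP Hl]]].
  exists (val p); split=> //. by rewrite size_tuple -ltnS ltn_ord.
- move=> [p [Hs Hp Hl]].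
  have Hm : size p < n.+1 by rewrite ltnS.
  exists (Ordinal Hm). apply/existsP. exists (in_tuple p). by rewrite /= Hp Hl eqxx.
Qed.

Lemma adj_sym F : symmetric (adj F).
Proof. move=> x y; by rewrite /adj eq_sym setUC. Qed.

Lemma reach_mono F n m v u : n <= m -> reachb F n v u -> reachb F m v u.
Proof.
move=> Hnm /reachbP [p [Hs Hp Hl]]; apply/reachbP; exists p; split=> //.
exact: leq_trans Hs Hnm.
Qed.

Lemma reach_cat F a b x y z :
  reachb F a x y -> reachb F b y z -> reachb F (a + b) x z.
Proof.
move=> /reachbP [p [Hs Hp Hl]] /reachbP [q [Hs' Hq Hl']].
apply/reachbP; exists (p ++ q); split.
- by rewrite size_cat leq_add.
- by rewrite cat_path Hp Hl Hq.
- by rewrite last_cat Hl.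
Qed.

Lemma reach_sym F a x y : reachb F a x y -> reachb F a y x.
Proof.
move=> /reachbP [p [Hs Hp Hl]]; apply/reachbP.
exists (rev (belast x p)); split.
- by rewrite size_rev size_belast.
- rewrite -Hl rev_path.
  apply: sub_path Hp => u v; by rewrite adj_sym.
- rewrite -Hl -(last_cons x) -rev_rcons -lastI rev_cons last_rcons //.
Qed.

Lemma reach_pred F j u y : reachb F j.+1 u y ->
  exists x, reachb F j u x /\ (x = y \/ adj F x y).
Proof.
move=> /reachbP [p [Hs Hp Hl]].
case: (leqP (size p) j) => Hsj.
  exists y; split; [apply/reachbP; exists p; split=> // | by left].
move: Hs Hp Hl Hsj; case/lastP: p => [//|p z].
rewrite size_rcons rcons_path last_rcons => Hs /andP [Hp He] Hz Hsj.
exists (last u p); split; last by right; rewrite -Hz.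
apply/reachbP; exists p; split=> //.
Qed.

Lemma reach0 F u : reachb F 0 u u.
Proof. by apply/reachbP; exists [::]. Qed.


Section Comp.
Variables (F : {set {set T}}) (x0 : T).
Let C := [set y | connect (adj F) x0 y].
Let H := comp_edges F C.

Lemma adjF_C x y : x \in C -> adj F x y -> (y \in C) /\ adj H x y.
Proof.
rewrite /C !inE => Hx Hxy.
have Hy : connect (adj F) x0 y by apply: connect_trans Hx (connect1 Hxy).
split=> //.
move: Hxy; rewrite /adj /H /comp_edges => /andP [-> HF] /=.
rewrite inE HF /=. apply/subsetP => z; rewrite !inE => /orP [] /eqP ->; by [rewrite Hx | rewrite Hy].
Qed.

Lemma adjH_F x y : adj H x y -> adj F x y.
Proof. by rewrite /adj /H /comp_edges inE => /andP [-> /andP [->]]. Qed.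

Lemma adjH_C x y : adj H x y -> (x \in C) /\ (y \in C).
Proof.
rewrite /adj /H /comp_edges inE => /andP [_ /andP [_ /subsetP Hs]].
by split; apply: Hs; rewrite !inE eqxx ?orbT.
Qed.

Lemma pathFH x p : x \in C -> path (adj F) x p -> path (adj H) x p && (last x p \in C).
Proof.
elim: p x => [|y p IH] x Hx /=; first by rewrite Hx.
move=> /andP [Hxy Hp]; have [Hy HH] := adjF_C Hx Hxy.
by rewrite HH IH.
Qed.

Lemma reachFH n x w : x \in C -> reachb F n x w -> reachb H n x w /\ w \in C.
Proof.
move=> Hx /reachbP [p [Hs Hp Hl]].
move: (pathFH Hx Hp) => /andP [Hp' Hc]; split; last by rewrite -Hl.
by apply/reachbP; exists p.
Qed.

Lemma reachHF n x w : reachb H n x w -> reachb F n x w.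
Proof.
move=> /reachbP [p [Hs Hp Hl]]; apply/reachbP; exists p; split=> //.
apply: sub_path Hp; exact: adjH_F.
Qed.

Lemma connH x y : x \in C -> y \in C -> exists2 n, n < #|T| & reachb H n x y.
Proof.
move=> Hx Hy.
have Hxy : connect (adj F) x y.
  move: Hx Hy; rewrite /C !inE => Hx Hy.
  rewrite (sym_connect_sym (@adj_sym F)) in Hx.
  exact: connect_trans Hx Hy.
case/connectP: Hxy => p Hp ->.
case: (shortenP Hp) => p' Hp' Hu _.
exists (size p').
  move/card_uniqP: Hu => /= Hs. by have := max_card (mem (x :: p')); rewrite Hs.
move: (pathFH Hx Hp') => /andP [Hp'' _].
by apply/reachbP; exists p'.
Qed.

Lemma dist_min u w m : reachb H m u w -> dist H u w <= m.
Proof.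
move=> Hr; rewrite /dist leqNgt; apply/negP => Hlt.
have Hm : m < #|T|.
  apply: leq_trans Hlt _. have := find_size (fun n => reachb H n u w) (iota 0 #|T|).
  by rewrite size_iota.
have := before_find 0 Hlt. by rewrite nth_iota // add0n Hr.
Qed.

Lemma dist_reach u w : u \in C -> w \in C -> reachb H (dist H u w) u w.
Proof.
move=> Hu Hw; have [n Hn Hr] := connH Hu Hw.
have Hhas : has (fun n => reachb H n u w) (iota 0 #|T|).
  apply/hasP; exists n => //; by rewrite mem_iota.
have Hf : find (fun n => reachb H n u w) (iota 0 #|T|) < #|T|.
  by move: Hhas; rewrite has_find size_iota.
have := nth_find 0 Hhas. by rewrite nth_iota // add0n.
Qed.

End Comp.

Section Main.
Variables (F : {set {set T}}) (x0 : T) (tau k : nat).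
Hypothesis tau_ge1 : 1 <= tau.
Hypothesis Htr : forall x y, adj F x y -> k - 2 <= supp F tau x y.
Local Notation C := [set y | connect (adj F) x0 y].
Local Notation H := (comp_edges F C).
Variables (u : T).
Hypothesis Hu : u \in C.
Local Notation W := (dist H u).
Local Notation kk := (maxn k 2).

Lemma level_pred y i : y \in C -> W y = i.+1 ->
  exists x, [/\ x \in C, W x = i & adj H x y].
Proof.
move=> Hy HW.
have := dist_reach Hu Hy; rewrite HW => /reach_pred [x [Hx []]].
  move=> Exy; have := dist_min Hx; rewrite Exy HW; by rewrite ltnn.
move=> Ha; have [HxC _] := adjH_C Ha.
exists x; split=> //.
have H1 := dist_min Hx.
have H1' : reachb H 1 x y by apply/reachbP; exists [:: y]; rewrite /= Ha.
have H2 := dist_min (reach_cat (dist_reach Hu HxC) H1').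
rewrite HW in H1 H2. lia.
Qed.

Lemma levels v : v \in C -> forall t, t <= W v -> exists2 y, y \in C & W y = W v - t.
Proof.
move=> Hv; elim=> [|t IH] Ht; first by exists v; rewrite ?subn0.
have [y Hy HWy] := IH (ltnW Ht).
have : W y = (W v - t.+1).+1 by rewrite HWy; lia.
move=> /(level_pred Hy) [x [Hx HWx _]]; by exists x.
Qed.

Definition S t := [set w in C | W w + tau <= t].

Lemma step v i : v \in C -> i < W v -> #|S i| + kk <= #|S (i + 2 * tau)|.
Proof.
move=> Hv Hi.
have [y Hy HWy] := levels Hv (leq_subr i.+1 (W v)).
rewrite subKn // in HWy.
have [x [Hx HWx Ha]] := level_pred Hy HWy.
have HaF := adjH_F Ha.
have Hxy : x != y by move: Ha => /andP [].
set A := [set x; y] :|: (Nb F tau x :&: Nb F tau y).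
have HA : kk <= #|A|.
  have Hd : [set x; y] :&: (Nb F tau x :&: Nb F tau y) = set0.
    apply/setP=> z; rewrite !inE.
    by case: (z == x); case: (z == y); rewrite ?andbF.
  rewrite /A cardsU Hd cards0 subn0 cards2 Hxy.
  have := Htr HaF; rewrite /supp; lia.
have HAin : forall z, z \in A -> [/\ z \in C, W z + tau <= i + 2 * tau & ~~ (W z + tau <= i)].
  move=> z Hz; rewrite !inE in Hz.
  case/orP: Hz => [/orP [] /eqP -> | /andP [/andP [_ Hxz] /andP [_ Hyz]]].
  - by rewrite Hx HWx; split=> //; lia.
  - by rewrite Hy HWy; split=> //; lia.
  - have [HxzH HzC] := reachFH Hx Hxz.
    have [HyzH _] := reachFH Hy Hyz.
    have H1 := dist_min (reach_cat (dist_reach Hu Hx) HxzH).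
    have H2 := dist_min (reach_cat (dist_reach Hu HzC) (reach_sym HyzH)).
    rewrite HWx HWy in H1 H2.
    by rewrite HzC; split=> //; lia.
have Hdisj : S i :&: A = set0.
  apply/setP => z; rewrite inE [in RHS]inE; apply/negP => /andP [Hz HzA].
  have [_ _ Hn] := HAin z HzA. by move: Hz; rewrite inE (negbTE Hn) andbF.
have Hsub : S i :|: A \subset S (i + 2 * tau).
  apply/subsetP => z; rewrite inE => /orP [|HzA].
    rewrite !inE => /andP [-> Hz] /=; lia.
  have [HzC Hz _] := HAin z HzA. by rewrite inE HzC Hz.
have := subset_leq_card Hsub; rewrite cardsU Hdisj cards0 subn0.
move=> Hle; apply: leq_trans Hle; by rewrite leq_add2l.
Qed.

Lemma steps v : v \in C -> forall j, 2 * tau * j < W v + 2 * tau -> kk * j <= #|S (2 * tau * j)|.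
Proof.
move=> Hv; elim=> [|j IH] Hj; first by rewrite muln0.
have Hj' : 2 * tau * j < W v by move: Hj; rewrite mulnS; lia.
have := step Hv Hj' => Hs.
have E : 2 * tau * j.+1 = 2 * tau * j + 2 * tau by rewrite mulnS addnC.
rewrite E; apply: leq_trans Hs; rewrite mulnS addnC leq_add2r; apply: IH; lia.
Qed.

Lemma S_card v t : v \in C -> #|S t| + (t < W v + tau) <= #|C|.
Proof.
move=> Hv; case: ltnP => Ht.
  rewrite (cardsD1 v C) Hv addn1 add1n ltnS; apply: subset_leq_card.
  apply/subsetP => z; rewrite /S !inE => /andP [HzC Hz]; rewrite HzC andbT.
  apply/negP => /eqP Ezv; move: Hz; rewrite Ezv; lia.
rewrite addn0; apply: subset_leq_card; apply/subsetP => z; rewrite /S inE => /andP [] //.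
Qed.

Lemma main_nat v : v \in C -> k * W v <= 2 * tau * (#|C| - 1).
Proof.
move=> Hv.
case Hd: (W v) => [|d]; first by rewrite muln0.
have Htp : 0 < 2 * tau by lia.
have Hdiv := divn_eq d (2 * tau).
have Hr := ltn_pmod d Htp.
set q := d %/ (2 * tau) in Hdiv *. set r := d %% (2 * tau) in Hdiv Hr *.
have Hj : 2 * tau * q.+1 < W v + 2 * tau by rewrite Hd; nia.
have H1 := steps Hv Hj.
have H2 := S_card (2 * tau * q.+1) Hv.
rewrite Hd in H2.
have Hkk : k <= kk by rewrite leq_maxl.
have Hkk2 : 2 <= kk by rewrite leq_maxr.
move: H2; case: ltnP => Hb H2.
-
  have E1 : kk * q.+1 <= #|C| - 1 by lia.
  have E2 : d.+1 <= 2 * tau * q.+1 by nia.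
  apply: leq_trans (leq_mul Hkk E2) _.
  rewrite [kk * _]mulnC -mulnA; apply: leq_mul => //; by rewrite mulnC.
- have E1 : kk * q.+1 <= #|C| by lia.
  have E2 : d.+1 + tau <= 2 * tau * q.+1 by lia.
  apply: leq_trans (leq_mul Hkk (leqnn d.+1)) _.
  have E3 : 2 * tau * (kk * q.+1 - 1) <= 2 * tau * (#|C| - 1).
    apply: leq_mul => //; lia.
  apply: leq_trans E3.
  nia.
Qed.

End Main.
End Aux.

Local Open Scope ring_scope.

Theorem mainTheorem2 (T : finType) (e : rel T) (e_sym : symmetric e)
  (e_irr : irreflexive e) (tau k : nat) (tau_ge1 : (1 <= tau)%N)
  (k_gt0 : (0 < k)%N) (F : {set {set T}}) (HF : is_truss e k tau F)
  (C : {set T}) (HC : is_component F C) :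
  ((diam (comp_edges F C) C)%:R : rat)
    <= (2 * tau * (#|C| - 1))%N%:R / k%:R.
Proof.
have /andP [_ /forallP Htr0] := maxsetp HF.
have Htr : forall x y, adj F x y -> (k - 2 <= supp F tau x y)%N.
  move=> x y; move: (Htr0 x) => /forallP /(_ y) /implyP; exact.
case: HC => x0 _ HC; subst C.
rewrite ler_pdivlMr ?ltr0n // -natrM ler_nat.
rewrite -(leq_divRL _ _ k_gt0).
rewrite /diam.
apply/bigmax_leqP => u Hu; apply/bigmax_leqP => v Hv.
rewrite (leq_divRL _ _ k_gt0) mulnC.
exact: (main_nat tau_ge1 Htr Hu Hv).
Qed.
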